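(* Let $t$ be a positive integer and let $p_1(x_1,\ldots,x_t)$, $p_2(x_1,\ldots,x_t)$ be polynomials with integer coefficients. Suppose there exist integers $s_1,s_2\ge 1$, matrices $A_1,M_1,N_1,B_1\in\mathbb{Z}^{s_1\times s_1}_{\rm uptr}$ and $A_2,M_2,N_2,B_2\in\mathbb{Z}^{s_2\times s_2}_{\rm uptr}$ such that \[A_1M_1^{a_1}N_1M_1^{a_2}N_1\cdots N_1M_1^{a_t}B_1=p_1(a_1,\ldots,a_t)E_{s_1}\] and \[A_2M_2^{a_1}N_2M_2^{a_2}N_2\cdots N_2M_2^{a_t}B_2=p_2(a_1,\ldots,a_t)E_{s_2}\] for all $a_1,\ldots,a_t\in\mathbb{N}$ (each product containing $t-1$ factors $N_j$). Then: (i) there exist $s_3\ge 1$ and $A_3,M_3,N_3,B_3\in\mathbb{Z}^{s_3\times s_3}_{\rm uptr}$ such that $A_3M_3^{a_1}N_3M_3^{a_2}N_3\cdots N_3M_3^{a_t}B_3=(p_1+p_2)(a_1,\ldots,a_t)E_{s_3}$ for all $a_1,\ldots,a_t\in\mathbb{N}$; (ii) there exist $s_4\ge 1$ and $A_4,M_4,N_4,B_4\in\mathbb{Z}^{s_4\times s_4}_{\rm uptr}$ such that $A_4M_4^{a_1}N_4M_4^{a_2}N_4\cdots N_4M_4^{a_t}B_4=(p_1p_2)(a_1,\ldots,a_t)E_{s_4}$ for all $a_1,\ldots,a_t\in\mathbb{N}$; (iii) for every $c\in\mathbb{Z}$ there exists $A_5\in\mathbb{Z}^{s_1\times s_1}_{\rm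 uptr}$ such that $A_5M_1^{a_1}N_1M_1^{a_2}N_1\cdots N_1M_1^{a_t}B_1=c\,p_1(a_1,\ldots,a_t)E_{s_1}$ for all $a_1,\ldots,a_t\in\mathbb{N}$.
   Context: $\mathbb{N}$ is the set of nonnegative integers. $\mathbb{Z}^{s\times s}_{\rm uptr}$ is the set of upper-triangular $s\times s$ integer matrices. $E_s$ denotes the $s\times s$ matrix whose only nonzero entry is the entry in row $1$, column $s$, equal to $1$. *)

(* Defs.v *)
From HB Require Import structures.
From mathcomp Require Import all_boot all_order all_algebra.
From mathcomp Require Export mpoly.
Set Implicit Arguments. Unset Strict Implicit. Unset Printing Implicit Defensive.
Import Order.TTheory GRing.Theory Num.Theory.
Local Open Scope ring_scope.

Definition uptr (n : nat) (A : 'M[int]_n) : Prop :=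
  forall i j : 'I_n, (j < i)%N -> A i j = 0.

(* E_s for s = n.+1 : the only nonzero entry is 1 in row 1, column s. *)
Definition Emx (n : nat) : 'M[int]_(n.+1) := delta_mx ord0 ord_max.

Fixpoint mword (n : nat) (M N : 'M[int]_(n.+1)) (l : seq nat) : 'M[int]_(n.+1) :=
  match l with
  | [::] => 1%:M
  | [:: a] => M ^+ a
  | a :: l' => M ^+ a *m N *m mword M N l'
  end.

Definition wordprod (t n : nat) (A M N B : 'M[int]_(n.+1)) (a : 'I_t -> nat)
  : 'M[int]_(n.+1) :=
  A *m mword M N [seq a i | i <- enum 'I_t] *m B.

Definition represents (t n : nat) (p : {mpoly int[t]}) (A M N B : 'M[int]_(n.+1)) : Prop :=
  [/\ uptr A, uptr M, uptr N, uptr B &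
    forall a : 'I_t -> nat,
      wordprod A M N B a = p.@[fun i => (a i)%:R] *: Emx n].

(* Main.v *)
Require Import Defs.
From HB Require Import structures.
From mathcomp Require Import all_boot all_order all_algebra.
From mathcomp Require Import mpoly.
From mathcomp Require Import mxtens zify.
Import GRing.Theory.
Local Open Scope ring_scope.

Section Hom.
Variables (n1 n2 k : nat) (g : 'M[int]_(n1.+1) -> 'M[int]_(n2.+1) -> 'M[int]_(k.+1)).
Hypothesis g1 : g 1%:M 1%:M = 1%:M.
Hypothesis gM : forall X1 Y1 X2 Y2, g (X1 *m Y1) (X2 *m Y2) = g X1 X2 *m g Y1 Y2.

Lemma g_exp M1 M2 a : g (M1 ^+ a) (M2 ^+ a) = (g M1 M2) ^+ a.
Proof.
elim: a => [|a IH]; first by rewrite !expr0.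
by rewrite !exprS -!mulmxE gM IH.
Qed.

Lemma g_mword M1 N1 M2 N2 l :
  mword (g M1 M2) (g N1 N2) l = g (mword M1 N1 l) (mword M2 N2 l).
Proof.
elim: l => [|a l IH] /=; first by rewrite g1.
case: l IH => [|b l] IH; first by rewrite g_exp.
by rewrite IH !gM g_exp.
Qed.

Lemma g_wordprod t A1 M1 N1 B1 A2 M2 N2 B2 (a : 'I_t -> nat) :
  wordprod (g A1 A2) (g M1 M2) (g N1 N2) (g B1 B2) a =
  g (wordprod A1 M1 N1 B1 a) (wordprod A2 M2 N2 B2 a).
Proof. by rewrite /wordprod g_mword !gM. Qed.
End Hom.

Lemma uptr_mul n (A B : 'M[int]_n) : uptr A -> uptr B -> uptr (A *m B).
Proof.
move=> hA hB i j ji; rewrite mxE big1 // => k _.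
case: (ltnP k i) => ki; first by rewrite hA // mul0r.
by rewrite hB ?mulr0 //; apply: leq_trans ji ki.
Qed.

Lemma uptr_add n (A B : 'M[int]_n) : uptr A -> uptr B -> uptr (A + B).
Proof. by move=> hA hB i j ji; rewrite mxE hA ?hB ?addr0. Qed.

Lemma uptr_scale n c (A : 'M[int]_n) : uptr A -> uptr (c *: A).
Proof. by move=> hA i j ji; rewrite mxE hA ?mulr0. Qed.

Lemma uptr_delta n (i0 j0 : 'I_n) : (i0 <= j0)%N -> uptr (delta_mx i0 j0).
Proof.
move=> h i j ji; rewrite mxE.
case: eqP => [ei|] //=; case: eqP => [ej|] //= ; subst.
by move: (leq_trans ji h); rewrite ltnn.
Qed.

Lemma uptr_block m n (A : 'M[int]_m) (B : 'M[int]_n) :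
  uptr A -> uptr B -> uptr (block_mx A 0 0 B).
Proof.
move=> hA hB i j.
rewrite -(splitK i) -(splitK j).
case: (split i) => i'; case: (split j) => j' /=.
- by rewrite block_mxEul => /hA.
- by rewrite block_mxEur mxE.
- by rewrite block_mxEdl mxE.
- by rewrite block_mxEdr /= ltn_add2l => /hB.
Qed.

Lemma uptr_tens m n (A : 'M[int]_m.+1) (B : 'M[int]_n.+1) :
  uptr A -> uptr B -> uptr (A *t B).
Proof.
move=> hA hB i j.
case: (mxtens_indexP i) => i1 i2; case: (mxtens_indexP j) => j1 j2.
rewrite tensmxE /= => h.
case: (ltnP j1 i1) => h1; first by rewrite hA // mul0r.
case: (ltnP j2 i2) => h2; first by rewrite hB // mulr0.
exfalso; move: h; rewrite ltnNge; apply/negP/negPn.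
by apply: leq_add => //; rewrite leq_mul2r h1 orbT.
Qed.
Lemma lr_neq m n (i:'I_m) (j:'I_n) : (lshift n i == rshift m j) = false.
Proof. apply/negbTE; rewrite -val_eqE /=; have := ltn_ord i; lia. Qed.
Lemma rl_neq m n (i:'I_m) (j:'I_n) : (rshift m j == lshift n i) = false.
Proof. by rewrite eq_sym lr_neq. Qed.

Section Sum.
Variables s1 s2 : nat.
Definition gS (X : 'M[int]_(s1.+1)) (Y : 'M[int]_(s2.+1)) : 'M[int]_(s1.+1 + s2.+1) :=
  block_mx X 0 0 Y.
Lemma gS1 : gS 1%:M 1%:M = 1%:M.
Proof. by rewrite /gS -scalar_mx_block. Qed.
Lemma gSM X1 Y1 X2 Y2 : gS (X1 *m Y1) (X2 *m Y2) = gS X1 X2 *m gS Y1 Y2.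
Proof. by rewrite /gS mulmx_block !mulmx0 !mul0mx !addr0 !add0r. Qed.

Definition l0 := lshift s2.+1 (@ord0 s1).
Definition lm := lshift s2.+1 (@ord_max s1).
Definition r0 := rshift s1.+1 (@ord0 s2).
Definition rm := rshift s1.+1 (@ord_max s2).

Definition Pm : 'M[int]_(s1.+1 + s2.+1) := delta_mx l0 l0 + delta_mx l0 r0.
Definition Qm : 'M[int]_(s1.+1 + s2.+1) := delta_mx lm rm + delta_mx rm rm.

Lemma gSE (c1 c2 : int) : gS (c1 *: Emx s1) (c2 *: Emx s2) =
  c1 *: delta_mx l0 lm + c2 *: delta_mx r0 rm.
Proof.
apply/matrixP => i j; rewrite /gS /Emx /l0 /lm /r0 /rm.
rewrite -(splitK i) -(splitK j).
case: (split i) => i'; case: (split j) => j' /=.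
- by rewrite block_mxEul !mxE !(inj_eq (@lshift_inj _ _)) !lr_neq mulr0 addr0.
- by rewrite block_mxEur !mxE lr_neq rl_neq /= andbF !mulr0 addr0.
- by rewrite block_mxEdl !mxE lr_neq rl_neq /= andbF !mulr0 addr0.
- by rewrite block_mxEdr !mxE !(inj_eq (@rshift_inj _ _)) !rl_neq mulr0 add0r.
Qed.

Lemma PQ (c1 c2 : int) : Pm *m gS (c1 *: Emx s1) (c2 *: Emx s2) *m Qm =
   (c1 + c2) *: delta_mx l0 rm.
Proof.
rewrite gSE /Pm /Qm.
rewrite !(mulmxDl, mulmxDr) -!scalemxAr -!scalemxAl !mul_delta_mx_cond.
rewrite /l0 /r0 /lm /rm !eqxx !lr_neq !rl_neq /= !mulr0n !mulr1n ?mul0mx !mul_delta_mx_cond !eqxx ?lr_neq ?rl_neq /= !mulr1n ?scaler0 ?addr0 ?add0r.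
by rewrite scalerDl.
Qed.

Lemma Emx_sum : (delta_mx l0 rm : 'M[int]_(s1.+1 + s2.+1)) = Emx (s1 + s2.+1).
Proof.
rewrite /Emx; apply/matrixP => i j; rewrite !mxE.
congr ((_ && _)%:R); rewrite -!val_eqE /= /l0 /rm /=; congr (_ == _); lia.
Qed.
End Sum.
Section Prod.
Variables s1 s2 : nat.
Definition gT (X : 'M[int]_(s1.+1)) (Y : 'M[int]_(s2.+1)) : 'M[int]_(s1.+1 * s2.+1) :=
  X *t Y.

Lemma mxtens_eq (i1 j1 : 'I_s1.+1) (i2 j2 : 'I_s2.+1) :
  (mxtens_index (i1, i2) == mxtens_index (j1, j2)) = (i1 == j1) && (i2 == j2).
Proof. by rewrite (inj_eq (can_inj (@mxtens_indexK _ _))). Qed.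

Lemma gT1 : gT 1%:M 1%:M = 1%:M.
Proof.
apply/matrixP => i j; rewrite /gT.
case: (mxtens_indexP i) => i1 i2; case: (mxtens_indexP j) => j1 j2.
rewrite tensmxE !mxE mxtens_eq.
by case: (i1 == j1); case: (i2 == j2); rewrite /= ?mulr1 ?mulr0 ?mul0r.
Qed.

Lemma gTM X1 Y1 X2 Y2 : gT (X1 *m Y1) (X2 *m Y2) = gT X1 X2 *m gT Y1 Y2.
Proof. by rewrite /gT tensmx_mul. Qed.

Lemma gTE (c1 c2 : int) :
  (gT (c1 *: Emx s1) (c2 *: Emx s2) : 'M_((s2 + s1 * s2.+1).+1))
   = (c1 * c2) *: Emx (s2 + s1 * s2.+1).
Proof.
apply/matrixP => i j; rewrite /gT /Emx.
case: (@mxtens_indexP s1.+1 s2.+1 i) => i1 i2; case: (@mxtens_indexP s1.+1 s2.+1 j) => j1 j2.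
rewrite (tensmxE (c1 *: delta_mx ord0 ord_max) (c2 *: delta_mx ord0 ord_max)) !mxE.
have -> : (mxtens_index (i1, i2) == ord0 :> 'I_(s2 + s1 * s2.+1).+1) = (i1 == ord0) && (i2 == ord0).
  rewrite -!val_eqE /=; apply/eqP/andP => [h|[/eqP -> /eqP ->]] //.
  by split; apply/eqP; nia.
have -> : (mxtens_index (j1, j2) == ord_max :> 'I_(s2 + s1 * s2.+1).+1) = (j1 == ord_max) && (j2 == ord_max).
  rewrite -!val_eqE /=; apply/eqP/andP => [h|[/eqP -> /eqP ->]]; last by rewrite /= mulnS; lia.
  have := ltn_ord j1; have := ltn_ord j2 => h1 h2.
  by split; apply/eqP; nia.
case: (i1 == ord0); case: (i2 == ord0); case: (j1 == ord_max); case: (j2 == ord_max);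
  rewrite /= ?mulr1 ?mulr0 ?mul0r //.
Qed.
End Prod.
Arguments gS {s1 s2}. Arguments gT {s1 s2}.

Theorem lemma4p2 (t : nat) (ht : (0 < t)%N) (p1 p2 : {mpoly int[t]})
  (s1 s2 : nat)
  (A1 M1 N1 B1 : 'M[int]_(s1.+1)) (A2 M2 N2 B2 : 'M[int]_(s2.+1)) :
  represents p1 A1 M1 N1 B1 ->
  represents p2 A2 M2 N2 B2 ->
  [/\ (exists s3 (A3 M3 N3 B3 : 'M[int]_(s3.+1)), represents (p1 + p2) A3 M3 N3 B3),
      (exists s4 (A4 M4 N4 B4 : 'M[int]_(s4.+1)), represents (p1 * p2) A4 M4 N4 B4) &
      (forall c : int, exists A5 : 'M[int]_(s1.+1),
          represents (c *: p1) A5 M1 N1 B1)].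
Proof.
move=> [uA1 uM1 uN1 uB1 h1] [uA2 uM2 uN2 uB2 h2]; split.
- exists (s1 + s2.+1).
  exists (Pm s1 s2 *m gS A1 A2), (gS M1 M2), (gS N1 N2), (gS B1 B2 *m Qm s1 s2).
  split.
  + apply: uptr_mul; last exact (@uptr_block _ _ _ _ uA1 uA2).
    by apply: uptr_add; apply: uptr_delta.
  + exact (@uptr_block _ _ _ _ uM1 uM2).
  + exact (@uptr_block _ _ _ _ uN1 uN2).
  + apply: uptr_mul; first exact (@uptr_block _ _ _ _ uB1 uB2).
    by apply: uptr_add; apply: uptr_delta => /=; lia.
  + move=> a.
    have e := @g_wordprod s1 s2 (s1 + s2.+1) (@gS s1 s2) (@gS1 s1 s2) (@gSM s1 s2)
      t A1 M1 N1 B1 A2 M2 N2 B2 a.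
    transitivity (Pm s1 s2 *m wordprod (gS A1 A2) (gS M1 M2) (gS N1 N2) (gS B1 B2) a *m Qm s1 s2).
      by rewrite /wordprod !mulmxA.
    by rewrite e h1 h2 PQ mevalD Emx_sum.
- exists (s2 + s1 * s2.+1).
  exists (gT A1 A2), (gT M1 M2), (gT N1 N2), (gT B1 B2).
  split.
  + exact (@uptr_tens _ _ _ _ uA1 uA2).
  + exact (@uptr_tens _ _ _ _ uM1 uM2).
  + exact (@uptr_tens _ _ _ _ uN1 uN2).
  + exact (@uptr_tens _ _ _ _ uB1 uB2).
  + move=> a.
    have e := @g_wordprod s1 s2 (s2 + s1 * s2.+1) (@gT s1 s2) (@gT1 s1 s2) (@gTM s1 s2)
      t A1 M1 N1 B1 A2 M2 N2 B2 a.
    by rewrite e h1 h2 gTE mevalM.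
- move=> c; exists (c *: A1); split => //; first exact: uptr_scale.
  move=> a; by rewrite /wordprod -!scalemxAl -/(wordprod _ _ _ _ a) h1 mevalZ scalerA.
Qed.
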